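(* Let $\delta>0$ and $x_0>0$. Call a pair $(x(\cdot),y(\cdot))$ admissible if $y:[0,\infty)\to(0,\infty)$ is Lebesgue measurable and locally bounded and $x:[0,\infty)\to\mathbb{R}$ is the (locally absolutely continuous, Carathéodory) solution on $[0,\infty)$ of $\dot x(t)=x(t)(1-x(t))-y(t)x(t)$, $x(0)=x_0$. Then for every admissible pair the limit \[ \lim_{T\to\infty}\int_0^T e^{-\delta t}\big[\ln x(t)+\ln y(t)\big]\,dt \] exists and is either finite or equal to $-\infty$. *)

(* Defs.v *)
From HB Require Import structures.
From mathcomp Require Import all_boot all_order all_algebra.
From mathcomp Require Import all_classical all_reals all_analysis.
Set Implicit Arguments. Unset Strict Implicit. Unset Printing Implicit Defensive.
Import Order.TTheory GRing.Theory Num.Theory.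
Import numFieldNormedType.Exports.
Local Open Scope classical_set_scope.
Local Open Scope ring_scope.

Definition rhs (R : realType) (x y : R -> R) (s : R) : R :=
  x s * (1 - x s) - y s * x s.

(* (x, y) is admissible for initial value x0:
   - y : [0,oo) -> (0,oo) is Lebesgue measurable and locally bounded;
   - x is the Caratheodory solution on [0,oo) of x' = x(1-x) - y x, x(0)=x0,
     i.e. for every t >= 0 the right-hand side is Lebesgue integrable on
     [0,t] and x t = x0 + int_0^t rhs (this integral form is equivalent to
     x locally absolutely continuous satisfying the ODE a.e.). *)
Definition admissible (R : realType) (x0 : R) (x y : R -> R) : Prop :=
  [/\ measurable_fun (`[0%R, +oo[%classic : set R) y,
      (forall t, 0 <= t -> 0 < y t),
      (forall T, 0 <= T -> exists M : R, forall t, 0 <= t <= T -> y t <= M)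
    & (forall t, 0 <= t ->
        (@lebesgue_measure R).-integrable `[0%R, t]%classic
            (fun s => (rhs x y s)%:E) /\
        x t = x0 + \int[@lebesgue_measure R]_(s in `[0%R, t]%classic) rhs x y s)].

(* Main.v *)
Require Import Defs.
From HB Require Import structures.
From mathcomp Require Import all_boot all_order all_algebra.
From mathcomp Require Import all_classical all_reals all_analysis.
From mathcomp Require Import ring lra.
Import measurable_realfun.
Import Order.TTheory GRing.Theory Num.Theory.
Import numFieldNormedType.Exports.
Local Open Scope classical_set_scope.
Local Open Scope ring_scope.
Local Notation mu := (@lebesgue_measure _).

Lemma adm_x0 (R : realType) (x0 : R) x y : admissible x0 x y -> x 0 = x0.
Proof.
case=> _ _ _ /(_ 0 (lexx _)) [_ ->].
by rewrite set_itv1 Rintegral_set1 addr0.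
Qed.

Lemma adm_cont (R : realType) (x0 : R) x y b : admissible x0 x y -> 0 <= b ->
  {within `[0, b], continuous x}.
Proof.
case=> _ _ _ H b0; have [ib _] := H b b0.
have := parameterized_integral_continuous b0 ib.
move=> c.
have c2 : {within `[0, b], continuous (fun t => x0 + parameterized_integral mu 0 t (rhs x y))}.
  move=> t; apply: cvgD; first exact: cvg_cst.
  exact: c.
apply: subspace_eq_continuous c2 => t; rewrite inE /= in_itv /= => /andP[t0 _].
by have [_ E] := H t t0; rewrite /from_subspace /= E.
Qed.

Lemma adm_incr (R : realType) (x0 : R) x y a s : admissible x0 x y -> 0 <= a -> a <= s ->
  mu.-integrable `[a, s] (EFin \o rhs x y) /\
  x s - x a = \int[mu]_(t in `[a, s]) rhs x y t.
Proof.
case=> _ _ _ H a0 las.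
have [iS ->] := H s (le_trans a0 las).
have [_ ->] := H a a0.
have ias : mu.-integrable `[a, s] (EFin \o rhs x y).
  apply: integrableS iS => //; apply: subset_itvr; rewrite bnd_simp //.
split => //.
rewrite opprD addrACA subrr add0r Rintegral_itvB //; try by rewrite bnd_simp.
rewrite Rintegral_itv_obnd_cbnd //.
apply: integrableS ias => //; apply: subset_itvr; rewrite bnd_simp //.
Qed.

Arguments adm_incr {R x0 x y a s}.
Arguments adm_cont {R x0 x y b}.
Arguments adm_x0 {R x0 x y}.

Lemma mu_cc (R : realType) (a s : R) : a <= s -> fine (@lebesgue_measure R `[a, s]) = s - a.
Proof.
move=> las; rewrite lebesgue_measure_itv /= lte_fin.
by case: ltgtP las => // -> _; rewrite subrr.
Qed.

Lemma cst_integrable (R : realType) (a s C : R) :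
  mu.-integrable `[a, s] (EFin \o (fun _ : R => C)).
Proof.
apply: continuous_compact_integrable; first exact: segment_compact.
by move=> t; exact: cvg_cst.
Qed.

Lemma int_bound (R : realType) (a s C : R) (f : R -> R) : a <= s ->
  mu.-integrable `[a, s] (EFin \o f) ->
  (forall t, a <= t <= s -> `|f t| <= C) ->
  `|\int[mu]_(t in `[a, s]) f t| <= C * (s - a).
Proof.
move=> las fi fC.
apply: (le_trans (le_normr_Rintegral _ fi)) => //.
apply: (@le_trans _ _ (\int[mu]_(t in `[a, s]) C)).
  apply: le_Rintegral.
  - by [].
  - exact: integrable_norm.
  - exact: cst_integrable.
  - by move=> t /=; rewrite in_itv /= => /fC.
by rewrite Rintegral_cst // mu_cc.
Qed.

Lemma rhsE (R : realType) (x y : R -> R) s : rhs x y s = x s * (1 - x s - y s).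
Proof. rewrite /rhs; ring. Qed.

Lemma norm_cont (R : realType) (f : R -> R) (A : set R) :
  {within A, continuous f} -> {within A, continuous (fun t => `|f t|)}.
Proof. by move=> c t; apply: cvg_norm; exact: c. Qed.
Arguments norm_cont {R f A}.

Lemma adm_step (R : realType) (x0 : R) x y (b K : R) :
  admissible x0 x y -> 0 <= b -> 1 <= K ->
  (forall t, 0 <= t <= b -> `|1 - x t - y t| <= K) ->
  forall a, 0 <= a -> a + (4 * K)^-1 <= b -> 0 < x a ->
  forall s, a <= s <= a + (4 * K)^-1 -> 0 < x s.
Proof.
move=> adm b0 K1 gK a a0 ab xa s /andP[las lsh].
set h := (4 * K)^-1 in ab lsh.
have K0 : 0 < K by apply: lt_le_trans K1.
have h0 : 0 < h by rewrite invr_gt0 mulr_gt0.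
have Kh : K * h = 4^-1 by rewrite /h invfM mulrCA mulfV ?gt_eqF // mulr1.
have cx : {within `[a, a + h], continuous (fun t => `|x t|)}.
  apply: norm_cont; apply: (@continuous_subspaceW _ _ _ `[0, b]).
    by apply: subset_itvScc; rewrite bnd_simp // (le_trans a0) // lerDl ltW.
  exact: adm_cont adm b0.
have ah : a <= a + h by rewrite lerDl ltW.
have [d dI dmax] := EVT_max ah cx.
set m := `|x d|.
have key : forall u, a <= u <= a + h -> `|x u - x a| <= m / 4.
  move=> u /andP[au uh].
  have [iu ->] := adm_incr adm a0 au.
  apply: le_trans (@int_bound _ a u (K * m) _ au iu _) _.
    move=> t /andP[aT tu]; rewrite rhsE normrM mulrC.
    apply: ler_pM => //.
      apply: gK; rewrite (le_trans a0 aT) /= (le_trans tu) // (le_trans uh) //.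
    apply: dmax; rewrite in_itv /= aT /= (le_trans tu uh) //.
  rewrite -mulrA (mulrC m) mulrA.
  have -> : m / 4 = K * h * m by rewrite Kh mulrC.
  rewrite -mulrA -mulrA; apply: ler_wpM2l; first exact: ltW.
  apply: ler_wpM2r; first exact: normr_ge0.
  by rewrite lerBlDl.
have := key d; rewrite in_itv /= in dI; move=> /(_ dI).
have := key s; rewrite las lsh => /(_ isT).
rewrite !ler_norml => /andP[h1 h2] /andP[h3 h4].
have m0 : 0 <= m := normr_ge0 _.
have : m = x d \/ m = - x d.
  by rewrite /m; case: (ler0P (x d)) => _; [right|left].
lra.
Qed.

Arguments adm_step {R x0 x y b K}.

Lemma adm_pos (R : realType) (x0 : R) x y : 0 < x0 -> admissible x0 x y ->
  forall t, 0 <= t -> 0 < x t.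
Proof.
move=> x00 adm T0 T00.
set b := T0 + 1.
have b0 : 0 <= b by rewrite /b addr_ge0.
have [_ ypos ybd _] := adm.
have [M HM] := ybd b b0.
have [c cI cmax] := EVT_max b0 (norm_cont (adm_cont adm b0)).
set K := 1 + `|x c| + `|M|.
have K1 : 1 <= K by rewrite /K -addrA lerDl addr_ge0.
have gK : forall t, 0 <= t <= b -> `|1 - x t - y t| <= K.
  move=> t tI.
  have yt := ypos t (proj1 (andP tI)).
  have h1 := HM t tI.
  have h2 : M <= `|M| := ler_norm M.
  have : `|x t| <= `|x c| by apply: cmax; rewrite in_itv.
  rewrite /K ler_norml !ler_norml => /andP[h3 h4].
  apply/andP; split; lra.
set h := (4 * K)^-1.
have K0 : 0 < K by apply: lt_le_trans K1.
have h0 : 0 < h by rewrite invr_gt0 mulr_gt0.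
have h1 : h <= 1.
  rewrite /h invf_le1 ?mulr_gt0 //; lra.
have ind : forall n : nat, forall t, 0 <= t <= T0 -> t <= n%:R * h -> 0 < x t.
  elim=> [|n IH] t /andP[t0 tT].
    rewrite mul0r => t00.
    have -> : t = 0 by apply/eqP; rewrite eq_le t00 t0.
    by rewrite (adm_x0 adm).
  move=> tn.
  have [tl|tg] := leP t (n%:R * h).
    by apply: IH => //; rewrite t0.
  have a0 : 0 <= n%:R * h by rewrite mulr_ge0 // ltW.
  apply: (adm_step adm b0 K1 gK _ a0 _ _ t).
  - rewrite /b; apply: lerD => //; apply: le_trans tT; exact: ltW.
  - apply: IH => //; rewrite a0 /=; apply: le_trans tT; exact: ltW.
  - rewrite (ltW tg) /=; move: tn; rewrite -natr1 mulrDl mul1r. done.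
have T0h : 0 <= T0 / h by rewrite divr_ge0 // ltW.
apply: (ind (Num.bound (T0 / h))); first by rewrite T00 lexx.
rewrite -ler_pdivrMr //; exact: ltW (archi_boundP T0h).
Qed.

Lemma adm_meas (R : realType) (x0 : R) x y : admissible x0 x y ->
  measurable_fun (`[0%R, +oo[%classic : set R) x.
Proof.
move=> adm; rewrite itv0y_bigcup0S; apply/measurable_fun_bigcup => // n.
apply: measurable_realfun.subspace_continuous_measurable_fun => //.
exact: adm_cont adm _.
Qed.

Arguments adm_meas {R x0 x y}.
Arguments adm_pos {R x0 x y}.

Lemma adm_xy_meas (R : realType) (x0 : R) x y : admissible x0 x y ->
  measurable_fun (`[0%R, +oo[%classic : set R) (fun t => x t * y t).
Proof.
move=> adm; have [ym _ _ _] := adm.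
exact: measurable_funM (adm_meas adm) ym.
Qed.

Arguments adm_xy_meas {R x0 x y}.

Lemma adm_xy_int (R : realType) (x0 : R) x y (T : R) : 0 < x0 -> admissible x0 x y -> 0 <= T ->
  (\int[mu]_(t in `[0%R, T]%classic) (x t * y t)%:E <= (x0 + T / 4)%:E)%E.
Proof.
move=> x00 adm T0.
have [_ ypos _ H] := adm.
have [iT xT] := H T T0.
have sub : `[0, T] `<=` (`[0%R, +oo[%classic : set R).
  by apply: subset_itvl; rewrite bnd_simp.
have ic := @cst_integrable R 0 T (4^-1).
have ig : mu.-integrable `[0, T] (EFin \o (fun t => 4^-1 - rhs x y t)).
  exact: (integrableB _ ic iT).
have le1 : (\int[mu]_(t in `[0%R, T]%classic) (x t * y t)%:E <=
   \int[mu]_(t in `[0%R, T]%classic) (4^-1 - rhs x y t)%:E)%E.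
  apply: ge0_le_integral => //.
  - move=> t; rewrite /= in_itv /= => /andP[t0 _].
    by rewrite lee_fin mulr_ge0 // ltW // ?(adm_pos x00 adm) ?ypos.
  - apply/measurable_EFinP; apply: measurable_funS (adm_xy_meas adm) => //.
  - exact: measurable_int ig.
  - move=> t; rewrite /= in_itv /= => /andP[t0 _]; rewrite lee_fin /rhs.
    rewrite -subr_ge0.
    have -> : 4^-1 - (x t * (1 - x t) - y t * x t) - x t * y t = (x t - 2^-1) ^+ 2.
      by rewrite expr2; field.
    exact: sqr_ge0.
apply: (le_trans le1).
rewrite -(fineK (integrable_fin_num _ ig)) // lee_fin.
change (\int[mu]_(t in `[0%R, T]%classic) (4^-1 - rhs x y t) <= x0 + T / 4).
rewrite RintegralB // Rintegral_cst // mu_cc // subr0.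
have := adm_pos x00 adm T T0.
lra.
Qed.
Lemma geo_bound (R : realType) (C q : R) : 0 <= C -> 0 < q -> q < 1 ->
  (\sum_(n <oo) (C * q ^+ n)%:E <= (C / (1 - q))%:E)%E.
Proof.
move=> C0 q0 q1.
apply: lime_le.
  by apply: is_cvg_nneseries => n _ _; rewrite lee_fin mulr_ge0 // exprn_ge0 // ltW.
apply: nearW => n.
rewrite sumEFin lee_fin.
have := @geometric_le_lim R n C q C0 q0; rewrite gtr0_norm // => /(_ q1).
by [].
Qed.
Arguments geo_bound {R C q}.

Lemma term_bound (R : realType) (d x0 : R) (n : nat) : 0 < d -> 0 <= x0 ->
  expR (- d * n%:R) * (x0 + n.+1%:R / 4) <=
  (x0 + 4^-1 + 2^-1 * d^-1) * expR (- d / 2) ^+ n.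
Proof.
move=> d0 x00.
set z := expR (- d / 2) ^+ n.
have zE : z = expR (n%:R * (- d / 2)) by rewrite expRM_natl.
have z0 : 0 < z by rewrite zE expR_gt0.
have z1 : z <= 1.
  have : 0 <= n%:R :> R by [].
  set m := n%:R => m0.
  have : expR (m * (- d / 2)) <= expR 0 by rewrite ler_expR; nra.
  by rewrite expR0 -zE.
have ez : expR (- d * n%:R) = z * z by rewrite zE -expRD; congr expR; field.
have nz : n%:R * z <= 2 * d^-1.
  have E : z * expR (n%:R * (d / 2)) = 1 by rewrite zE -expRD -expR0; congr expR; field.
  have := expR_ge1Dx (n%:R * (d / 2)).
  set e := expR _ in E *.
  move=> he.
  have e0 : 0 < e by rewrite /e expR_gt0.
  have en : e != 0 by rewrite gt_eqF.
  have -> : z = e^-1 by rewrite -[z](mulfK en) E mul1r.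
  rewrite ler_pdivrMr // -ler_pdivrMl; last by rewrite mulr_gt0 // invr_gt0.
  rewrite invfM invrK.
  have : 0 <= n%:R :> R by [].
  move: he; set m := n%:R; move=> he m0.
  have : 2^-1 * d * m <= e by lra.
  by rewrite mulrC.
rewrite ez -natr1.
have w0 : 0 < d^-1 by rewrite invr_gt0.
set w := d^-1 in nz w0 *.
set m := n%:R in nz *.
have h1 : z * z * x0 <= z * x0.
  by rewrite -mulrA ler_piMl // mulr_ge0 // ltW.
have h2 : z * z <= z by rewrite ler_piMl // ltW.
have h3 : z * (m * z) <= z * (2 * w) by rewrite ler_pM2l.
lra.
Qed.

Lemma expR_meas (R : realType) (d : R) (D : set R) : measurable D ->
  measurable_fun D (fun t : R => expR (- d * t)).
Proof.
move=> mD; apply: measurable_funS (continuous_measurable_fun _) => //.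
move=> t; apply: continuous_comp; last exact: continuous_expR.
by apply: cvgM; [exact: cvg_cst | exact: cvg_id].
Qed.

Lemma adm_weighted (R : realType) (d x0 : R) x y : 0 < d -> 0 < x0 -> admissible x0 x y ->
  (\int[mu]_(t in `[0%R, +oo[%classic) (expR (- d * t) * (x t * y t))%:E < +oo)%E.
Proof.
move=> d0 x00 adm.
have [_ ypos _ _] := adm.
set F := fun n : nat => (`[n%:R, n.+1%:R[%classic : set R).
have UF : (`[0%R, +oo[%classic : set R) = \bigcup_n F n.
  apply/seteqP; split => t /=.
  - rewrite in_itv /= andbT => t0; exists (Num.truncn t) => //.
    by rewrite /F /= in_itv /=; exact: truncn_itv t0.
  - case=> n _; rewrite /F /= !in_itv /= andbT => /andP[nt _].
    exact: le_trans nt.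
have mF : forall n, measurable (F n) by move=> n; exact: measurable_itv.
have tF : trivIset setT F.
  move=> i j _ _ [t []]; rewrite /F /= !in_itv /= => /andP[it ti] /andP[jt tj].
  apply/eqP; rewrite eqn_leq; apply/andP; split; rewrite -ltnS -(ltr_nat R).
  - exact: le_lt_trans it tj.
  - exact: le_lt_trans jt ti.
have hm : measurable_fun (`[0%R, +oo[%classic : set R)
    (fun t => (expR (- d * t) * (x t * y t))%:E).
  apply/measurable_EFinP; apply: measurable_funM; first exact: expR_meas.
  exact: adm_xy_meas adm.
rewrite UF ge0_integral_bigcup //; last 2 first.
- by rewrite -UF.
- rewrite -UF => t; rewrite /= in_itv /= andbT => t0.
  by rewrite lee_fin mulr_ge0 ?expR_ge0 // mulr_ge0 // ltW ?(adm_pos x00 adm) ?ypos.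
set C := x0 + 4^-1 + 2^-1 * d^-1.
set q := expR (- d / 2).
have q0 : 0 < q by rewrite expR_gt0.
have q1 : q < 1.
  rewrite /q -[X in _ < X]expR0 ltr_expR; lra.
have C0 : 0 <= C.
  have w : 0 < d^-1 by rewrite invr_gt0.
  rewrite /C; lra.
apply: (@le_lt_trans _ _ (\sum_(n <oo) (C * q ^+ n)%:E)%E); last first.
  by apply: le_lt_trans (geo_bound C0 q0 q1) _; exact: ltry.
apply: lee_nneseries.
  move=> n _ _; apply: integral_ge0 => t; rewrite /F /= in_itv /= => /andP[nt _].
  have t0 : 0 <= t by exact: le_trans nt.
  by rewrite lee_fin mulr_ge0 ?expR_ge0 // mulr_ge0 // ltW ?(adm_pos x00 adm) ?ypos.
move=> n _.
set c := expR (- d * n%:R).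
have c0 : 0 <= c by rewrite expR_ge0.
have sub : F n `<=` `[0%R, n.+1%:R]%classic.
  move=> t; rewrite /F /= !in_itv /= => /andP[nt tn]; by rewrite (le_trans _ nt) //= ltW.
have sub2 : (`[0%R, n.+1%:R]%classic : set R) `<=` `[0%R, +oo[%classic.
  by apply: subset_itvl; rewrite bnd_simp.
have xym : measurable_fun (`[0%R, n.+1%:R]%classic : set R) (fun t => (x t * y t)%:E).
  apply/measurable_EFinP; apply: measurable_funS (adm_xy_meas adm) => //.
have xy0 : forall t, `[0%R, n.+1%:R]%classic t -> (0 <= (x t * y t)%:E)%E.
  move=> t; rewrite /= in_itv /= => /andP[t0 _].
  by rewrite lee_fin mulr_ge0 // ltW ?(adm_pos x00 adm) ?ypos.
apply: (@le_trans _ _ (\int[mu]_(t in F n) (c%:E * (x t * y t)%:E))%E).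
  apply: ge0_le_integral => //; first exact: mF.
  - move=> t; rewrite /F /= in_itv /= => /andP[nt _].
    have t0 : 0 <= t by exact: le_trans nt.
    by rewrite lee_fin mulr_ge0 ?expR_ge0 // mulr_ge0 // ltW ?(adm_pos x00 adm) ?ypos.
  - apply: measurable_funS hm => //; rewrite UF; exact: bigcup_sup.
  - apply: emeasurable_funM; first exact: measurable_cst.
    apply: measurable_funS xym => //.
  - move=> t; rewrite /F /= in_itv /= => /andP[nt _].
    have t0 : 0 <= t by exact: le_trans nt.
    rewrite -EFinM lee_fin; apply: ler_wpM2r.
      by rewrite mulr_ge0 // ltW ?(adm_pos x00 adm) ?ypos.
    by rewrite /c ler_expR !mulNr lerN2 ler_wpM2l // ltW.
apply: (@le_trans _ _ (\int[mu]_(t in `[0%R, n.+1%:R]%classic) (c%:E * (x t * y t)%:E))%E).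
  apply: ge0_subset_integral => //; first exact: mF.
  - apply: emeasurable_funM; first exact: measurable_cst.
    exact: xym.
  - by move=> t /xy0 h; rewrite mule_ge0.
rewrite ge0_integralZl_EFin //.
apply: (@le_trans _ _ (c%:E * (x0 + n.+1%:R / 4)%:E)%E).
  by apply: lee_wpmul2l => //; apply: adm_xy_int => //.
by rewrite -EFinM lee_fin; exact: term_bound _ _ _ n d0 (ltW x00).
Qed.

Arguments adm_weighted {R d x0 x y}.

Theorem lemma7p2 (R : realType) (delta x0 : R) (x y : R -> R) :
  0 < delta -> 0 < x0 -> admissible x0 x y ->
  exists l : \bar R, l != +oo%E /\
    ((fun T : R => (\int[@lebesgue_measure R]_(t in `[0%R, T]%classic)
        (expR (- delta * t) * (ln (x t) + ln (y t)))%:E)%E)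
       @ +oo --> l).
Proof.
move=> d0 x00 adm.
have [ym ypos _ _] := adm.
set D := (`[0%R, +oo[%classic : set R).
set G := fun t : R => (expR (- delta * t) * (ln (x t) + ln (y t)))%:E.
have mD : measurable D by exact: measurable_itv.
have Gm : measurable_fun D G.
  apply/measurable_EFinP; apply: measurable_funM; first exact: expR_meas.
  apply: measurable_funD.
  - by apply: (measurableT_comp (@measurable_ln R)); exact: adm_meas adm.
  - by apply: (measurableT_comp (@measurable_ln R)); exact: ym.
have Gpm : measurable_fun D (G^\+)%E by exact: measurable_funepos.
have Gnm : measurable_fun D (G^\-)%E by exact: measurable_funeneg.
have subD : forall T, (`[0%R, T]%classic : set R) `<=` D.
  by move=> T; apply: subset_itvl; rewrite bnd_simp.
set A := fun T : R => (\int[@lebesgue_measure R]_(t in `[0%R, T]%classic) G^\+ t)%E.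
set B := fun T : R => (\int[@lebesgue_measure R]_(t in `[0%R, T]%classic) G^\- t)%E.
have nd : forall F : R -> \bar R, measurable_fun D F -> (forall t, (0 <= F t)%E) ->
    nondecreasing_fun (fun T : R => (\int[@lebesgue_measure R]_(t in `[0%R, T]%classic) F t)%E).
  move=> F Fm F0 T1 T2 T12; apply: ge0_subset_integral => //.
  - exact: measurable_funS Fm.
  - by apply: subset_itvl; rewrite bnd_simp.
have Acvg := nondecreasing_cvge (nd _ Gpm (funepos_ge0 G)).
have Bcvg := nondecreasing_cvge (nd _ Gnm (funeneg_ge0 G)).
set sA := ereal_sup (range A) in Acvg.
set sB := ereal_sup (range B) in Bcvg.
have sA0 : (0 <= sA)%E.
  apply: le_trans (ereal_sup_ubound _) => /=; last by exists 0.
  exact: integral_ge0.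
have sB0 : (0 <= sB)%E.
  apply: le_trans (ereal_sup_ubound _) => /=; last by exists 0.
  exact: integral_ge0.
have Pfin := adm_weighted d0 x00 adm.
have GP : forall t, D t -> (G^\+ t <= (expR (- delta * t) * (x t * y t))%:E)%E.
  move=> t; rewrite /D /= in_itv /= andbT => t0.
  have xt := adm_pos x00 adm t t0; have yt := ypos t t0.
  have xy0 : 0 < x t * y t by rewrite mulr_gt0.
  rewrite funeposE /G ge_max; apply/andP; split; last first.
    by rewrite lee_fin mulr_ge0 ?expR_ge0 // ltW.
  rewrite lee_fin; apply: ler_wpM2l; first exact: expR_ge0.
  rewrite -lnM ?posrE //; exact: ltW (ln_sublinear xy0).
have sAfin : (sA < +oo)%E.
  apply: (le_lt_trans _ Pfin); apply: ge_ereal_sup => _ [T _ <-].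
  apply: (@le_trans _ _ (\int[@lebesgue_measure R]_(t in D) G^\+ t)%E).
    by apply: ge0_subset_integral => //; exact: subD.
  apply: ge0_le_integral => //.
  apply/measurable_EFinP; apply: measurable_funM; first exact: expR_meas.
  exact: adm_xy_meas adm.
have sAf : sA \is a fin_num by rewrite ge0_fin_numE.
exists (sA - sB)%E; split.
  rewrite lt_eqF //; apply: le_lt_trans sAfin.
  by rewrite -[X in (_ <= X)%E]sube0; apply: leeB.
have -> : (fun T : R => (\int[@lebesgue_measure R]_(t in `[0%R, T]%classic) G t)%E)
    = fun T => (A T - B T)%E.
  by apply: funext => T; rewrite integralE.
apply: cvgeB => //.
exact: fin_num_adde_defr.
Qed.
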